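(* Let $G^{c}$ be the graph obtained from the graph $G$ of the construction described in the context by additionally adding all edges $p_ip_{i'}$ for distinct $i,i'\in[t]$, and let $\ell=2|\mathcal{C}|+\frac{2n}{3}+1$. If $G^{c}$ has an acyclic matching of size at least $\ell$, then for some $q\in[t]$ the instance $(X,\mathcal{S}_q)$ of \textsc{Exact-3-Cover} is a Yes-instance.
   Context: Construction. Let $n=3c$ with $c\in\mathbb{N}$, $X=[n]$, and let $(X,\mathcal{S}_1),\dots,(X,\mathcal{S}_t)$ be instances of \textsc{Exact-3-Cover} (each $\mathcal{S}_i$ a collection of 3-element subsets of $X$, all $\mathcal{S}_i$ of the same size $m$ and pairwise distinct as collections). An instance $(X,\mathcal{S})$ is a Yes-instance if some subcollection of $\mathcal{S}$ covers every element of $X$ exactly once. Let $\mathcal{C}=\bigcup_{i\in[t]}\mathcal{S}_i=\{s_1,\dots,s_{|\mathcal{C}|}\}$ (distinct 3-sets). The graph $G$: a vertex set $X'=\{v_a:a\in X\}$; for each $s_j=\{a,b,c\}\in\mathcal{C}$ a set gadget $Q_j$ with vertices $u_{ja},u_{jb},u_{jc}$ (interface vertices), $u_j,w_j,u_j',w_j'$, where each of $u_j,w_j$ is adjacent to each of $u_{ja},u_{jb},u_{jc}$, and additionally $u_jw_j,u_ju_j',w_jw_j'$ are edges; for each $s_j\in\mathcal{C}$ and $d\in s_j$ the edge $u_{jd}v_d$; a vertex $p$ and vertices $P=\{p_1,\dots,p_t\}$ with edges $pp_i$ for all $i$; and for each $i\in[t]$ and each $s_j\in\mathcal{C}\setminus\mathcal{S}_i$,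 edges from $p_i$ to the three interface vertices of $Q_j$. There are no other edges. A matching $M$ is acyclic if the subgraph induced by the endpoints of its edges is a forest. *)

(* Defs.v *)
From HB Require Import structures.
From mathcomp Require Import all_boot.
Set Implicit Arguments. Unset Strict Implicit. Unset Printing Implicit Defensive.

(* Ground set X = 'I_n. *)

(** Set gadgets are indexed by the 3-set s itself (the sets s_j of C are
    distinct, so s determines j).  Vertices indexed by sets s outside C, or
    interface vertices Vint s d with d \notin s, are isolated (no edges) and
    hence irrelevant: they can never be endpoints of matching edges. *)
Inductive vtx (n t : nat) : Type :=
| Vx of 'I_n                      (* v_a *)
| Vint of {set 'I_n} & 'I_n       (* u_{j d}, d in s_j *)
| Vu of {set 'I_n}
| Vw of {set 'I_n}
| Vu' of {set 'I_n}
| Vw' of {set 'I_n}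
| Vp
| Vpi of 'I_t.

Section VtxFin.
Variables n t : nat.
Definition vcode (x : vtx n t) :
  ('I_n + ({set 'I_n} * 'I_n)) + (({set 'I_n} * 'I_4) + option 'I_t) :=
  match x with
  | Vx a => inl (inl a)
  | Vint s d => inl (inr (s, d))
  | Vu s => inr (inl (s, @Ordinal 4 0 isT))
  | Vw s => inr (inl (s, @Ordinal 4 1 isT))
  | Vu' s => inr (inl (s, @Ordinal 4 2 isT))
  | Vw' s => inr (inl (s, @Ordinal 4 3 isT))
  | Vp => inr (inr None)
  | Vpi i => inr (inr (Some i))
  end.
Definition vdecode (c : ('I_n + ({set 'I_n} * 'I_n)) + (({set 'I_n} * 'I_4) + option 'I_t)) : vtx n t :=
  match c with
  | inl (inl a) => @Vx n t a
  | inl (inr (s, d)) => @Vint n t s d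
  | inr (inl (s, k)) =>
      match nat_of_ord k with 0 => @Vu n t s | 1 => @Vw n t s | 2 => @Vu' n t s | _ => @Vw' n t s end
  | inr (inr None) => @Vp n t
  | inr (inr (Some i)) => @Vpi n t i
  end.
Lemma vcodeK : cancel vcode vdecode. Proof. by case. Qed.
HB.instance Definition _ := Finite.copy (vtx n t) (can_type vcodeK).
End VtxFin.

Section Construction.
Variables (n t : nat) (S : 'I_t -> {set {set 'I_n}}).

Definition Cset : {set {set 'I_n}} := \bigcup_(i < t) S i.

Definition adj0 (x y : vtx n t) : bool :=
  match x, y with
  | Vu s, Vint s' d => [&& s' == s, d \in s & s \in Cset]
  | Vw s, Vint s' d => [&& s' == s, d \in s & s \in Cset]
  | Vu s, Vw s' => (s' == s) && (s \in Cset)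
  | Vu s, Vu' s' => (s' == s) && (s \in Cset)
  | Vw s, Vw' s' => (s' == s) && (s \in Cset)
  | Vint s d, Vx a => [&& a == d, d \in s & s \in Cset]
  | Vp, Vpi _ => true
  | Vpi i, Vint s d => [&& d \in s, s \in Cset & s \notin S i]
  | _, _ => false
  end.

Definition adjG (x y : vtx n t) : bool := adj0 x y || adj0 y x.

Definition adjGc (x y : vtx n t) : bool :=
  adjG x y ||
  match x, y with Vpi i, Vpi i' => i != i' | _, _ => false end.
End Construction.

Section Graphs.
Variable V : finType.

Definition is_matching (e : rel V) (M : {set {set V}}) : Prop :=
  (forall E, E \in M -> exists x y, E = [set x; y] /\ e x y) /\
  (forall E1 E2, E1 \in M -> E2 \in M -> E1 != E2 -> [disjoint E1 & E2]).

Definition induced_forest (e : rel V) (U : {set V}) : Prop :=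
  ~ exists s : seq V, [/\ 3 <= size s, uniq s, all (fun x => x \in U) s & cycle e s].

Definition acyclic_matching (e : rel V) (M : {set {set V}}) : Prop :=
  is_matching e M /\ induced_forest e (cover M).
End Graphs.

Definition exact_cover_yes (n : nat) (F : {set {set 'I_n}}) : Prop :=
  exists T : {set {set 'I_n}}, T \subset F /\
    forall a : 'I_n, #|[set s in T | a \in s]| = 1.

(* Main.v *)
Require Import Defs.
From HB Require Import structures.
From mathcomp Require Import all_boot zify.
Set Implicit Arguments. Unset Strict Implicit. Unset Printing Implicit Defensive.
Section L18.
Variables (c t : nat) (S : 'I_t -> {set {set 'I_(3 * c)}}).
Local Notation n := (3 * c).
Local Notation V := (vtx n t).
Local Notation e := (adjGc S).
Local Notation C := (Cset S).
Local Notation VX := (@Vx n t).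
Local Notation VI := (@Vint n t).
Local Notation VU := (@Vu n t).
Local Notation VW := (@Vw n t).
Local Notation VU' := (@Vu' n t).
Local Notation VW' := (@Vw' n t).
Local Notation VP := (@Vp n t).
Local Notation VPI := (@Vpi n t).

Lemma adj_irr (x : V) : e x x = false.
Proof. case: x => [a|s d|s|s|s|s||i]; rewrite /adjGc /adjG /adj0 ?orbF ?orFb //.
by rewrite eqxx. Qed.

Lemma adj_sym (x y : V) : e x y = e y x.
Proof.
case: x => [a|s d|s|s|s|s||i]; case: y => [a'|s' d'|s'|s'|s'|s'||i'];
  rewrite /adjGc /adjG /adj0 ?orbF ?orFb //.
all: try by rewrite orbC.
by rewrite eq_sym.
Qed.

Definition wt (x : V) : nat :=
  match x with Vx _ => 2 | Vint _ _ => 1 | Vu _ | Vw _ => 2 | Vu' _ | Vw' _ => 1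
  | Vp => 1 | Vpi _ => 2 end.

Definition isPI (x : V) := if x is Vpi _ then true else false.

Lemma adj_wt (x y : V) : e x y -> 3 + (isPI x && isPI y) <= wt x + wt y.
Proof.
case: x => [a|s d|s|s|s|s||i]; case: y => [a'|s' d'|s'|s'|s'|s'||i'];
  rewrite /adjGc /adjG /adj0 ?orbF ?orFb //.
Qed.
Lemma adj_int s d (y : V) : e (VI s d) y -> (d \in s) && (s \in C).
Proof.
case: y => [a'|s' d'|s'|s'|s'|s'||i']; rewrite /adjGc /adjG /adj0 ?orbF ?orFb //.
- by case/and3P => _ -> ->.
- by case/and3P => /eqP -> -> ->.
- by case/and3P => /eqP -> -> ->.
- by case/and3P => -> -> _.
Qed.

Variable M : {set {set V}}.
Hypothesis HM : acyclic_matching e M.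
Local Notation U := (cover M).
Definition mate (x y : V) := [set x; y] \in M.

Lemma neq_adj x y : e x y -> x != y.
Proof. by move=> h; apply/eqP => E; rewrite E adj_irr in h. Qed.

Lemma mate_adj x y : mate x y -> e x y.
Proof.
move=> H; case: (HM.1.1 _ H) => a [b [Eab Hab]].
have hx : x \in [set a; b] by rewrite -Eab set21.
have hy : y \in [set a; b] by rewrite -Eab set22.
have ha : a \in [set x; y] by rewrite Eab set21.
have hb : b \in [set x; y] by rewrite Eab set22.
move: hx hy ha hb; rewrite !inE => /orP[/eqP->|/eqP->] /orP[/eqP->|/eqP->] //.
- by move=> _ /orP[/eqP Eb|/eqP Eb]; rewrite Eb adj_irr in Hab.
- by rewrite adj_sym.
- by move=> /orP[/eqP Eb|/eqP Eb]; rewrite Eb adj_irr in Hab.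
Qed.

Lemma mate_sym x y : mate x y = mate y x.
Proof. by rewrite /mate setUC. Qed.

Lemma mateU x y : mate x y -> x \in U.
Proof. by move=> H; apply/bigcupP; exists [set x; y] => //; rewrite set21. Qed.

Lemma Umate x : x \in U -> exists y, mate x y.
Proof.
case/bigcupP => E HE xE; case: (HM.1.1 _ HE) => a [b [Eab _]].
move: xE; rewrite Eab !inE => /orP[/eqP->|/eqP->]; first by exists b; rewrite /mate -Eab.
by exists a; rewrite /mate setUC -Eab.
Qed.

Lemma mate_uniq x y z : mate x y -> mate x z -> y = z.
Proof.
move=> Hy Hz; case: (eqVneq [set x; y] [set x; z]) => [Eq|Ne].
  have : z \in [set x; y] by rewrite Eq set22.
  rewrite !inE => /orP[/eqP Ez|/eqP -> //].
  by move: (neq_adj (mate_adj Hz)); rewrite Ez eqxx.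
by have := disjointFr (HM.1.2 _ _ Hy Hz Ne) (set21 x y); rewrite set21.
Qed.

Lemma tri x y z : x \in U -> y \in U -> z \in U -> e x y -> e y z -> e z x -> False.
Proof.
move=> hx hy hz exy eyz ezx; apply: HM.2; exists [:: x; y; z]; split => //.
- rewrite /= !inE negb_or (neq_adj exy) (neq_adj eyz) andbT /=.
  by rewrite eq_sym (neq_adj ezx).
- by rewrite /= hx hy hz.
- by rewrite /= exy eyz ezx.
Qed.

Lemma quad x y z w : x \in U -> y \in U -> z \in U -> w \in U -> x != z -> y != w ->
  e x y -> e y z -> e z w -> e w x -> False.
Proof.
move=> hx hy hz hw nxz nyw exy eyz ezw ewx; apply: HM.2; exists [:: x; y; z; w]; split => //.
- rewrite /= !inE !negb_or (neq_adj exy) (neq_adj eyz) (neq_adj ezw) nxz nyw /=.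
  by rewrite eq_sym (neq_adj ewx).
- by rewrite /= hx hy hz hw.
- by rewrite /= exy eyz ezw ewx.
Qed.
Definition code := (('I_n + ({set 'I_n} * 'I_n)) +
  ((({set 'I_n} + {set 'I_n}) + ({set 'I_n} + {set 'I_n})) + ('I_1 + 'I_t)))%type.
Definition dec (k : code) : V :=
  match k with
  | inl (inl a) => VX a
  | inl (inr (s, d)) => VI s d
  | inr (inl (inl (inl s))) => VU s
  | inr (inl (inl (inr s))) => VW s
  | inr (inl (inr (inl s))) => VU' s
  | inr (inl (inr (inr s))) => VW' s
  | inr (inr (inl _)) => VP
  | inr (inr (inr i)) => VPI i
  end.
Definition enc (x : V) : code :=
  match x with
  | Vx a => inl (inl a)
  | Vint s d => inl (inr (s, d))
  | Vu s => inr (inl (inl (inl s)))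
  | Vw s => inr (inl (inl (inr s)))
  | Vu' s => inr (inl (inr (inl s)))
  | Vw' s => inr (inl (inr (inr s)))
  | Vp => inr (inr (inl ord0))
  | Vpi i => inr (inr (inr i))
  end.
Lemma decK : cancel dec enc.
Proof.
case=> [[a|[s d]]|[[[s|s]|[s|s]]|[o|i]]] //=.
by rewrite (ord1 o).
Qed.
Lemma encK : cancel enc dec.
Proof. by case. Qed.

Lemma decomp (F : V -> nat) :
  \sum_(x : V) F x = (\sum_a F (VX a) + \sum_s \sum_d F (VI s d)) +
   (((\sum_s F (VU s) + \sum_s F (VW s)) + (\sum_s F (VU' s) + \sum_s F (VW' s))) +
    (F VP + \sum_i F (VPI i))).
Proof.
rewrite (reindex dec); last first.
  apply: onW_bij; exists enc; [exact: decK|exact: encK].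
rewrite !big_sumType big_ord1 pair_bigA /=.
by congr (_ + _); congr (_ + _); apply: eq_bigr => -[s d].
Qed.
Definition F (x : V) := if x \in U then wt x else 0.
Definition xpp := [exists i, exists j, mate (VPI i) (VPI j)].

Lemma trivM : trivIset M.
Proof. by apply/trivIsetP => A B hA hB; exact: HM.1.2. Qed.

Lemma sum2 (a b : V) : a != b -> \sum_(x in [set a; b]) wt x = wt a + wt b.
Proof. by move=> nab; rewrite big_setU1 ?big_set1 // inE. Qed.

Lemma edge_sum : 3 * #|M| + xpp <= \sum_x F x.
Proof.
rewrite -big_mkcond /= (big_trivIset _ trivM) /=.
have base : forall A, A \in M -> 3 <= \sum_(x in A) wt x.
  move=> A hA; case: (HM.1.1 _ hA) => a [b [-> hab]].
  rewrite sum2 ?(neq_adj hab) //; apply: leq_trans (adj_wt hab); exact: leq_addr.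
case: (boolP xpp) => [/existsP[i /existsP[j hij]]|_]; last first.
  rewrite addn0 mulnC -sum_nat_const; exact: leq_sum.
pose A0 := [set VPI i; VPI j].
have h1 : \sum_(A in M) (3 + (A == A0)) = 3 * #|M| + 1.
  rewrite big_split /= sum_nat_const mulnC; congr (_ + _).
  rewrite (bigD1 A0) //= eqxx big1 // => A /andP[_ /negbTE ->] //.
rewrite -h1; apply: leq_sum => A hA; case: (eqVneq A A0) => [->|_]; last by rewrite addn0 base.
have hij' := mate_adj hij.
by rewrite sum2 ?(neq_adj hij').
Qed.
Hypothesis HS3 : forall (i : 'I_t) (s : {set 'I_n}), s \in S i -> #|s| = 3.

Lemma cardC s : s \in C -> #|s| = 3.
Proof. by case/bigcupP => i _ /HS3. Qed.

Definition hv (b : bool) s := if b then VU s else VW s.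
Definition hv' (b : bool) s := if b then VU' s else VW' s.

Lemma adjPI_I i s d : e (VPI i) (VI s d) = [&& d \in s, s \in C & s \notin S i].
Proof. by rewrite /adjGc /adjG /adj0 !orbF. Qed.

Lemma adjhv_I b s d : e (hv b s) (VI s d) = (d \in s) && (s \in C).
Proof. by case: b; rewrite /hv /adjGc /adjG /adj0 !orbF eqxx. Qed.

Lemma adjU_W s : e (VU s) (VW s) = (s \in C).
Proof. by rewrite /adjGc /adjG /adj0 !orbF eqxx. Qed.

Lemma adjI_X s d a : e (VI s d) (VX a) = [&& a == d, d \in s & s \in C].
Proof. by rewrite /adjGc /adjG /adj0 !orbF. Qed.

Lemma nbr_I s d y : e (VI s d) y ->
  [\/ exists a, y = VX a, exists b, y = hv b s | exists i, y = VPI i].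
Proof.
case: y => [a'|s' d'|s'|s'|s'|s'||i']; rewrite /adjGc /adjG /adj0 ?orbF ?orFb //.
- by move=> _; apply: Or31; exists a'.
- by case/and3P => /eqP -> _ _; apply: Or32; exists true.
- by case/and3P => /eqP -> _ _; apply: Or32; exists false.
- by move=> _; apply: Or33; exists i'.
Qed.

Lemma nbr_hv' b s y : e (hv' b s) y -> y = hv b s.
Proof.
case: b; case: y => [a'|s' d'|s'|s'|s'|s'||i']; rewrite /hv /hv' /adjGc /adjG /adj0 ?orbF ?orFb //.
- by case/andP => /eqP ->.
- by case/andP => /eqP ->.
Qed.

Lemma nbr_hv b s y : e (hv b s) y -> s \in C.
Proof.
case: b; case: y => [a'|s' d'|s'|s'|s'|s'||i']; rewrite /hv /adjGc /adjG /adj0 ?orbF ?orFb //.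
all: first [by case/and3P | by case/andP | by case/andP => /eqP ->].
Qed.
Lemma IU s d : VI s d \in U -> (d \in s) && (s \in C).
Proof. by case/Umate => y /mate_adj /adj_int. Qed.

Lemma hvU b s : hv b s \in U -> s \in C.
Proof. by case/Umate => y /mate_adj /nbr_hv. Qed.

Lemma hv'U b s : hv' b s \in U -> mate (hv b s) (hv' b s).
Proof.
case/Umate => y hy; have Ey := nbr_hv' (mate_adj hy).
by rewrite Ey mate_sym in hy.
Qed.

Definition Is s := [set d | VI s d \in U].

Lemma Is_sub s : Is s \subset s.
Proof. by apply/subsetP => d; rewrite inE => /IU /andP[]. Qed.

Lemma sumI s : \sum_d F (VI s d) = #|Is s|.
Proof.
rewrite -sum1_card [RHS]big_mkcond /=; apply: eq_bigr => d _.
by rewrite inE /F; case: ifP.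
Qed.

Lemma F_hv b s : F (hv b s) = 2 * (hv b s \in U).
Proof. by rewrite /F; case: ifP; case: b. Qed.

Lemma F_hv' b s : F (hv' b s) = (hv' b s \in U).
Proof. by rewrite /F; case: ifP; case: b. Qed.

Lemma both s d : VU s \in U -> VW s \in U -> VI s d \in U -> False.
Proof.
move=> hu hw hI; have /andP[ds sC] := IU hI.
apply: (tri hu hw hI).
- by rewrite adjU_W.
- by have := adjhv_I false s d; rewrite ds sC.
- by rewrite adj_sym; have := adjhv_I true s d; rewrite ds sC.
Qed.

Lemma core4 b s d i : mate (VI s d) (VPI i) -> hv b s \in U -> Is s \subset [set d].
Proof.
move=> hm hb; apply/subsetP => d'; rewrite !inE => hd'.
apply/negPn/negP => ndd.
have hpi := mate_adj hm; rewrite adj_sym adjPI_I in hpi.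
case/and3P: hpi => ds sC sSi.
have /andP[d's _] := IU hd'.
apply: (@quad (VPI i) (VI s d) (hv b s) (VI s d')).
- by apply: (@mateU _ (VI s d)); rewrite mate_sym.
- exact: mateU hm.
- exact: hb.
- exact: hd'.
- by case: (b).
- by apply/eqP => -[E]; rewrite E eqxx in ndd.
- by rewrite adjPI_I ds sC sSi.
- by rewrite adj_sym adjhv_I ds sC.
- by rewrite adjhv_I d's sC.
- by rewrite adj_sym adjPI_I d's sC sSi.
Qed.
Definition full (s : {set 'I_n}) :=
  [forall d : 'I_n, (d \in s) ==> mate (VI s d) (VX d)] && ((VU s \in U) || (VW s \in U)).

Lemma core3 b s d : s \in C -> d \in s -> hv b s \in U -> hv (~~ b) s \notin U ->
  mate (hv b s) (hv' b s) -> ~~ mate (VI s d) (VX d) -> #|Is s| <= 2.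
Proof.
move=> sC ds hb nb hm nx; have c3 := cardC sC.
case: (boolP (VI s d \in U)) => hI; last first.
  have H : Is s \subset s :\ d.
    apply/subsetP => d'; rewrite !inE => h.
    rewrite (proj1 (andP (IU h))) andbT.
    by apply: contraNneq hI => <-.
  apply: leq_trans (subset_leq_card H) _.
  by have := cardsD1 d s; rewrite ds c3 /= => -[]; rewrite add0n => <-.
case: (Umate hI) => y hy.
case: (nbr_I (mate_adj hy)) => [[a Ey]|[b' Ey]|[i Ey]]; subst y.
- have := mate_adj hy; rewrite adjI_X => /and3P[/eqP Ea _ _].
  by rewrite Ea in hy; rewrite hy in nx.
- case: (eqVneq b' b) => [Eb|Nb].
    subst b'; rewrite mate_sym in hy.
    by have := mate_uniq hy hm; case: (b).
  have Eb' : b' = ~~ b by case: (b) (b') Nb => -[].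
  subst b'; rewrite mate_sym in hy.
  by rewrite (mateU hy) in nb.
- have := subset_leq_card (core4 hy hb); rewrite cards1 => h.
  exact: leq_trans h _.
Qed.

Definition Gs s := \sum_d F (VI s d) + ((F (VU s) + F (VW s)) + (F (VU' s) + F (VW' s))).

Lemma Gs_eq s : Gs s = #|Is s| + ((2 * (VU s \in U) + 2 * (VW s \in U)) +
   ((VU' s \in U) + (VW' s \in U))).
Proof.
rewrite /Gs sumI (F_hv true s) (F_hv false s) (F_hv' true s) (F_hv' false s) //.
Qed.

Lemma Is0 s : (VU s \in U) -> (VW s \in U) -> #|Is s| = 0.
Proof.
move=> hu hw; apply/eqP; rewrite cards_eq0; apply/eqP/setP => d; rewrite !inE.
by apply/negbTE/negP => hI; exact: both hu hw hI.
Qed.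

Lemma g0 s : s \notin C -> Gs s = 0.
Proof.
move=> sC; rewrite Gs_eq.
have h1 : Is s = set0.
  by apply/setP => d; rewrite !inE; apply/negbTE/negP => /IU /andP[_]; rewrite (negbTE sC).
have hu : VU s \notin U by apply/negP => /(@hvU true); rewrite (negbTE sC).
have hw : VW s \notin U by apply/negP => /(@hvU false); rewrite (negbTE sC).
have hu' : VU' s \notin U by apply/negP => /(@hv'U true) /mateU; rewrite (negbTE hu).
have hw' : VW' s \notin U by apply/negP => /(@hv'U false) /mateU; rewrite (negbTE hw).
by rewrite h1 cards0 (negbTE hu) (negbTE hw) (negbTE hu') (negbTE hw').
Qed.

Lemma g1 s : Gs s <= 6.
Proof.
case: (boolP (s \in C)) => sC; last by rewrite g0.
rewrite Gs_eq.
have f1 : #|Is s| <= 3 by apply: leq_trans (subset_leq_card (Is_sub s)) _; rewrite cardC.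
have f2 : (VU' s \in U) <= (VU s \in U).
  by case: (boolP (VU' s \in U)) => // /(@hv'U true)/mateU ->.
have f3 : (VW' s \in U) <= (VW s \in U).
  by case: (boolP (VW' s \in U)) => // /(@hv'U false)/mateU ->.
have f4 : ((VU s \in U) && (VW s \in U)) * #|Is s| = 0.
  by case: (boolP (VU s \in U)) => hu; case: (boolP (VW s \in U)) => hw //=; rewrite Is0.
move: f2 f3 f4; case: (VU s \in U); case: (VW s \in U); case: (VU' s \in U);
  case: (VW' s \in U) => /= f2 f3 f4; move: f1 f4; move: #|Is s| => k; lia.
Qed.
Lemma Is3 s : s \in C -> #|Is s| <= 3.
Proof. by move=> sC; apply: leq_trans (subset_leq_card (Is_sub s)) _; rewrite cardC. Qed.

Lemma hu'U s : VU' s \in U -> VU s \in U.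
Proof. by move/(@hv'U true)/mateU. Qed.
Lemma hw'U s : VW' s \in U -> VW s \in U.
Proof. by move/(@hv'U false)/mateU. Qed.

Lemma g4 s d i : mate (VI s d) (VPI i) -> Gs s <= 4.
Proof.
move=> hm; have hI := mateU hm; have /andP[ds sC] := IU hI.
rewrite Gs_eq.
case: (boolP (VU s \in U)) => hu; case: (boolP (VW s \in U)) => hw.
- by case: (both hu hw hI).
- have k1 : #|Is s| <= 1 by apply: leq_trans (subset_leq_card (@core4 true s d i hm _)) _; rewrite ?cards1.
  have hw' : VW' s \notin U by apply: contra hw; exact: hw'U.
  rewrite (negbTE hw') /=; move: k1; move: #|Is s| => k; case: (VU' s \in U) => /=; lia.
- have k1 : #|Is s| <= 1 by apply: leq_trans (subset_leq_card (@core4 false s d i hm _)) _; rewrite ?cards1.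
  have hu' : VU' s \notin U by apply: contra hu; exact: hu'U.
  rewrite (negbTE hu') /=; move: k1; move: #|Is s| => k; case: (VW' s \in U) => /=; lia.
- have hw' : VW' s \notin U by apply: contra hw; exact: hw'U.
  have hu' : VU' s \notin U by apply: contra hu; exact: hu'U.
  rewrite (negbTE hu') (negbTE hw') /=; move: (Is3 sC); move: #|Is s| => k; lia.
Qed.

Lemma g3 s d : VI s d \in U -> ~~ full s -> Gs s <= 5.
Proof.
move=> hI nf; have /andP[ds sC] := IU hI.
rewrite Gs_eq.
case: (boolP (VU s \in U)) => hu; case: (boolP (VW s \in U)) => hw.
- by case: (both hu hw hI).
- have hw' : VW' s \notin U by apply: contra hw; exact: hw'U.
  rewrite (negbTE hw') /=.
  case: (boolP (VU' s \in U)) => hu' /=; last by move: (Is3 sC); move: #|Is s| => k; lia.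
  move: nf; rewrite /full hu /= andbT => /forallPn [d']; rewrite negb_imply => /andP[d's nx].
  have := @core3 true s d' sC d's hu hw (hv'U (b:=true) hu') nx.
  by move: #|Is s| => k; lia.
- have hu' : VU' s \notin U by apply: contra hu; exact: hu'U.
  rewrite (negbTE hu') /=.
  case: (boolP (VW' s \in U)) => hw' /=; last by move: (Is3 sC); move: #|Is s| => k; lia.
  move: nf; rewrite /full hw orbT /= andbT => /forallPn [d']; rewrite negb_imply => /andP[d's nx].
  have := @core3 false s d' sC d's hw hu (hv'U (b:=false) hw') nx.
  by move: #|Is s| => k; lia.
- have hw' : VW' s \notin U by apply: contra hw; exact: hw'U.
  have hu' : VU' s \notin U by apply: contra hu; exact: hu'U.
  rewrite (negbTE hu') (negbTE hw') /=; move: (Is3 sC); move: #|Is s| => k; lia.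
Qed.
Definition PIs := [set i | VPI i \in U].

Lemma adjPP i j : e (VPI i) (VPI j) = (i != j).
Proof. by rewrite /adjGc /adjG /adj0. Qed.
Lemma adjP_PI i : e VP (VPI i).
Proof. by rewrite /adjGc /adjG /adj0. Qed.

Lemma nbr_PI i y : e (VPI i) y ->
  [\/ y = VP, exists j, y = VPI j | exists s d, y = VI s d].
Proof.
case: y => [a'|s' d'|s'|s'|s'|s'||i']; rewrite /adjGc /adjG /adj0 ?orbF ?orFb //.
- by move=> _; apply: Or33; exists s', d'.
- by move=> _; apply: Or31.
- by move=> _; apply: Or32; exists i'.
Qed.

Lemma TP_eq : F VP + \sum_i F (VPI i) = (VP \in U) + 2 * #|PIs|.
Proof.
congr (_ + _).
rewrite -sum1_card big_distrr /= [RHS]big_mkcond /=; apply: eq_bigr => i _.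
by rewrite inE /F; case: ifP.
Qed.

Lemma PI2 : #|PIs| <= 2.
Proof.
rewrite leqNgt; apply/negP => /card_gt2P [i [j [k [[hi hj hk] [nij njk nki]]]]].
rewrite !inE in hi hj hk.
by apply: (tri hi hj hk); rewrite adjPP.
Qed.

Lemma PIp : 1 < #|PIs| -> VP \notin U.
Proof.
move=> /card_gt1P [i [j [hi hj nij]]]; rewrite !inE in hi hj.
by apply/negP => hp; apply: (tri hp hi hj); rewrite ?adjP_PI ?adjPP.
Qed.

Lemma TPa : F VP + \sum_i F (VPI i) <= 4.
Proof.
rewrite TP_eq; have := PI2; have := @PIp.
case: (VP \in U) => /=; move: #|PIs| => k; last by lia.
by move=> h1 h2; case: k h1 h2 => [|[|[|k]]] //= h1; have := h1 isT.
Qed.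

Lemma TPb : 3 <= F VP + \sum_i F (VPI i) -> exists q, VPI q \in U.
Proof.
rewrite TP_eq; case: (boolP (0 < #|PIs|)) => [/card_gt0P [q]|]; first by rewrite inE; exists q.
by rewrite -eqn0Ngt => /eqP ->; case: (VP \in U).
Qed.

Lemma TPc : F VP + \sum_i F (VPI i) = 4 -> ~~ xpp -> exists s d i, mate (VI s d) (VPI i).
Proof.
rewrite TP_eq => h4 nx.
have k2 : 1 < #|PIs| by move: h4 PI2; case: (VP \in U) => /=; move: #|PIs| => k; lia.
have np := PIp k2.
have /card_gt0P [i] : 0 < #|PIs| by apply: leq_trans k2.
rewrite inE => /Umate [y hy].
case: (nbr_PI (mate_adj hy)) => [Ey|[j Ey]|[s [d Ey]]]; subst y.
- by rewrite mate_sym in hy; rewrite (mateU hy) in np.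
- by case/negP: nx; apply/existsP; exists i; apply/existsP; exists j.
- by exists s, d, i; rewrite mate_sym.
Qed.
Lemma nbr_X a y : e (VX a) y -> exists s, y = VI s a.
Proof.
case: y => [a'|s' d'|s'|s'|s'|s'||i']; rewrite /adjGc /adjG /adj0 ?orbF ?orFb //.
by case/and3P => /eqP -> _ _; exists s'.
Qed.

Lemma sum_slack (T : finType) (A : pred T) (G : T -> nat) b k s0 : s0 \in A ->
  (forall s, s \in A -> G s <= b) -> G s0 + k <= b -> \sum_(s in A) G s + k <= #|A| * b.
Proof.
move=> hs hb h0.
rewrite -sum_nat_const (bigD1 s0) //= [in X in _ <= X](bigD1 s0) //= addnAC.
apply: leq_add => //; apply: leq_sum => s /andP[h _]; exact: hb.
Qed.

Lemma sum_slackT (T : finType) (G : T -> nat) b k s0 :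
  (forall s, G s <= b) -> G s0 + k <= b -> \sum_s G s + k <= #|T| * b.
Proof.
move=> hb h0.
rewrite -sum_nat_const (bigD1 s0) //= [in X in _ <= X](bigD1 s0) //= addnAC.
apply: leq_add => //; exact: leq_sum.
Qed.

Lemma TX_bound : \sum_a F (VX a) + 2 * [exists a, VX a \notin U] <= 2 * n.
Proof.
case: (boolP [exists a, VX a \notin U]) => [/existsP [a0 ha0]|_].
  rewrite /= muln1; apply: leq_trans (@sum_slackT _ (fun a => F (VX a)) 2 2 a0 _ _) _.
  - by move=> a; rewrite /F; case: ifP.
  - by rewrite /F (negbTE ha0).
  - by rewrite card_ord mulnC.
rewrite /= muln0 addn0; apply: leq_trans (_ : _ <= \sum_(a < n) 2) _.
  by apply: leq_sum => a _; rewrite /F; case: ifP.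
by rewrite big_const_ord iter_addn_0 mulnC.
Qed.

Lemma TG_C : \sum_s Gs s = \sum_(s in C) Gs s.
Proof.
rewrite [LHS](bigID (fun s => s \in C)) /= [X in _ + X]big1 ?addn0 // => s /g0 -> //.
Qed.

Lemma TG_bound : \sum_(s in C) Gs s <= #|C| * 6.
Proof. by rewrite -sum_nat_const; apply: leq_sum => s _; exact: g1. Qed.

Lemma TG3 s d : VI s d \in U -> ~~ full s -> \sum_(s in C) Gs s + 1 <= #|C| * 6.
Proof.
move=> hI nf; have /andP[_ sC] := IU hI.
apply: (sum_slack sC) => [s' _|]; first exact: g1.
by have := g3 hI nf; rewrite addn1.
Qed.

Lemma TG4 s d i : mate (VI s d) (VPI i) -> \sum_(s in C) Gs s + 2 <= #|C| * 6.
Proof.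
move=> hm; have /andP[_ sC] := IU (mateU hm).
apply: (sum_slack sC) => [s' _|]; first exact: g1.
by have := g4 hm; rewrite addn2.
Qed.
Theorem main (Hsize : 2 * #|C| + 2 * c + 1 <= #|M|) : exists q, exact_cover_yes (S q).
Proof.
have E := edge_sum; rewrite decomp in E.
have EG : \sum_s \sum_d F (VI s d) + ((\sum_s F (VU s) + \sum_s F (VW s)) +
    (\sum_s F (VU' s) + \sum_s F (VW' s))) = \sum_(s in C) Gs s.
  by rewrite -TG_C /Gs !big_split.
have E2 : 3 * #|M| + xpp <= \sum_a F (VX a) + \sum_(s in C) Gs s + (F VP + \sum_i F (VPI i)).
  by rewrite -EG; move: E; rewrite !addnA.
have H1 := TX_bound; have H2 := TG_bound; have Ha := TPa.
have Hb := TPb; have Hc := TPc.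
have H3 : forall s d, VI s d \in U -> ~~ full s -> \sum_(s in C) Gs s + 1 <= #|C| * 6.
  by move=> s d; exact: TG3.
have H4 : forall s d i, mate (VI s d) (VPI i) -> \sum_(s in C) Gs s + 2 <= #|C| * 6.
  by move=> s d i; exact: TG4.
clear E EG.
set TX := \sum_a F (VX a) in E2 H1.
set TG := \sum_(s in C) Gs s in E2 H2 H3 H4.
set TP := F VP + \sum_i F (VPI i) in E2 Ha Hb Hc.
set k := #|M| in Hsize E2.
set cC := #|C| in Hsize H2 H3 H4.
set bx := [exists a, VX a \notin U] in H1.
clearbody TX TG TP k cC.
have xb : xpp <= 1 by case: (xpp).
have bxb : bx <= 1 by case: (bx).
have h3 : 3 <= TP.
  rewrite leqNgt; apply/negP => lt3.
  move: E2 H1 H2 Ha Hsize lt3 xb bxb; move: (nat_of_bool xpp) (nat_of_bool bx) => x y; lia.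
have [q hq] := Hb h3.
have h4 : TP <= 3 + xpp.
  case: (boolP xpp) => hx; first by rewrite /= add3n.
  rewrite leqNgt; apply/negP => h4.
  have [s [d [i hm]]] : exists s d i, mate (VI s d) (VPI i).
    by apply: Hc => //; apply/eqP; rewrite eqn_leq Ha.
  have := H4 _ _ _ hm.
  move: E2 H1 Ha Hsize h4 xb bxb; rewrite (negbTE hx) /=; move: (nat_of_bool bx) => y; lia.
have hX : forall a, VX a \in U.
  move=> a; apply/negPn/negP => na.
  have hb : bx by apply/existsP; exists a.
  move: E2 H1 H2 h4 Hsize xb; rewrite hb /=; move: (nat_of_bool xpp) => x; lia.
have hF : forall s d, VI s d \in U -> full s.
  move=> s d hI; apply/negPn/negP => nf.
  have := H3 _ _ hI nf.
  move: E2 H1 h4 Hsize xb bxb; move: (nat_of_bool xpp) (nat_of_bool bx) => x y; lia.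
clear E2 H1 H2 H3 H4 Ha Hb Hc h3 h4.
exists q, [set s | [exists d, VI s d \in U]]; split.
  apply/subsetP => s; rewrite inE => /existsP [d hd].
  have /andP[/forallP hall hub] := hF s d hd.
  have /andP[ds sC] := IU hd.
  apply/negPn/negP => ns.
  have : 1 < #|s| by rewrite cardC.
  case/card_gt1P => a [b [ha hb nab]].
  have hIa : VI s a \in U by apply: (@mateU _ (VX a)); move: (hall a); rewrite ha.
  have hIb : VI s b \in U by apply: (@mateU _ (VX b)); move: (hall b); rewrite hb.
  have [bb hbb] : exists bb, hv bb s \in U by case/orP: hub => h; [exists true|exists false].
  apply: (@quad (VPI q) (VI s a) (hv bb s) (VI s b)) => //.
  - by case: (bb).
  - by apply/eqP => -[E]; rewrite E eqxx in nab.
  - by rewrite adjPI_I ha sC ns.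
  - by rewrite adj_sym adjhv_I ha sC.
  - by rewrite adjhv_I hb sC.
  - by rewrite adj_sym adjPI_I hb sC ns.
move=> a; case: (Umate (hX a)) => y hy.
case: (nbr_X (mate_adj hy)) => s0 Ey; subst y.
have hI0 : VI s0 a \in U by rewrite mate_sym in hy; exact: mateU hy.
have /andP[as0 _] := IU hI0.
rewrite (_ : [set s : {set 'I_n} in _ | a \in s] = [set s0]) ?cards1 //; apply/setP => s; rewrite !inE.
apply/andP/eqP => [[/existsP [d hd] hs]|->]; last by split => //; apply/existsP; exists a.
have /andP[/forallP hall _] := hF s d hd.
have hm : mate (VX a) (VI s a) by rewrite mate_sym; move: (hall a); rewrite hs.
by have := mate_uniq hm hy => -[].
Qed.
End L18.

Theorem lemma18 (c t m : nat) (S : 'I_t -> {set {set 'I_(3 * c)}})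
  (HS3 : forall (i : 'I_t) (s : {set 'I_(3 * c)}), s \in S i -> #|s| = 3)
  (Hm : forall i : 'I_t, #|S i| = m)
  (Hdist : injective S)
  (M : {set {set vtx (3 * c) t}})
  (HM : acyclic_matching (adjGc S) M)
  (Hsize : 2 * #|Cset S| + 2 * c + 1 <= #|M|) :
  exists q : 'I_t, exact_cover_yes (S q).
Proof. exact: (main HM HS3 Hsize). Qed.
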